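(* Let $(\alpha_j)_{j\geq 1}$ be a sequence of pairwise distinct complex numbers and let $(P_k)_{k\geq 0}$ be the polynomials defined in the context. Let $(a_k)_{k\geq0}$ and $(b_k)_{k\geq 0}$ be complex sequences such that both series $\sum_{k=0}^\infty a_k P_k(z)$ and $\sum_{k=0}^\infty b_k P_k(z)$ converge uniformly on compact subsets of $\mathbb{C}$. If $\sum_{k=0}^{\infty} a_k P_k(z) = \sum_{k=0}^{\infty} b_k P_k(z)$ for all $z \in \mathbb{C}$, then $a_k = b_k$ for every $k \geq 0$.
   Context: Every integer $n \geq 1$ can be written uniquely as $n = (1+2+\cdots+m_n) + j_n$ with integers $m_n \geq 0$ and $1 \leq j_n \leq m_n+1$. Define polynomials by $P_0(z) = 1$ and recursively $P_n(z) = (z - \alpha_{j_n}) P_{n-1}(z)$ for $n \geq 1$ (so $\deg P_n = n$; e.g. $P_1=(z-\alpha_1)$, $P_2=(z-\alpha_1)^2$, $P_3=(z-\alpha_1)^2(z-\alpha_2)$, $P_4=(z-\alpha_1)^3(z-\alpha_2)$). *)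

(* Defs.v *)
From Stdlib Require Import Reals.
Open Scope R_scope.

Definition Cplx : Type := (R * R)%type.
Definition C0 : Cplx := (0, 0).
Definition C1 : Cplx := (1, 0).
Definition Cadd (x y : Cplx) : Cplx := (fst x + fst y, snd x + snd y).
Definition Csub (x y : Cplx) : Cplx := (fst x - fst y, snd x - snd y).
Definition Cmul (x y : Cplx) : Cplx :=
  (fst x * fst y - snd x * snd y, fst x * snd y + snd x * fst y).
Definition Cnorm (x : Cplx) : R := sqrt (fst x * fst x + snd x * snd x).

(* (m_n, j_n) with n = (1+...+m_n) + j_n, 1 <= j_n <= m_n + 1, for n >= 1,
   computed by walking n = 1, 2, 3, ...: (0,1), (1,1), (1,2), (2,1), ...
   The value at n = 0 is a dummy (0,0). *)
Fixpoint mj (n : nat) : nat * nat :=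
  match n with
  | O => (O, O)
  | S n' => let (m, j) := mj n' in
            if Nat.eqb j (S m) then (S m, 1%nat) else (m, S j)
  end.

Definition jn (n : nat) : nat := snd (mj n).

Fixpoint P (alpha : nat -> Cplx) (n : nat) (z : Cplx) : Cplx :=
  match n with
  | O => C1
  | S n' => Cmul (Csub z (alpha (jn (S n')))) (P alpha n' z)
  end.

Fixpoint psum (alpha : nat -> Cplx) (a : nat -> Cplx) (N : nat) (z : Cplx) : Cplx :=
  match N with
  | O => C0
  | S N' => Cadd (psum alpha a N' z) (Cmul (a N') (P alpha N' z))
  end.

(* compact subsets of Cplx (Heine-Borel): closed and bounded *)
Definition compactC (K : Cplx -> Prop) : Prop :=
  (exists M : R, forall z, K z -> Cnorm z <= M) /\
  (forall z, (forall eps, eps > 0 -> exists w, K w /\ Cnorm (Csub w z) < eps) -> K z).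

Definition series_cv_uc (alpha a : nat -> Cplx) (f : Cplx -> Cplx) : Prop :=
  forall K, compactC K ->
  forall eps, eps > 0 -> exists N0 : nat, forall N z, (N >= N0)%nat -> K z ->
    Cnorm (Csub (psum alpha a N z) (f z)) < eps.

(* Main.v *)
Require Import Defs.
From Stdlib Require Import Reals.
Open Scope R_scope.
From Stdlib Require Import Lra Lia Classical.
From Coquelicot Require Import Complex.

Local Notation CC := Complex.C.

Lemma Cnorm_Cmod (x : Cplx) : Cnorm x = Cmod x.
Proof. unfold Cnorm, Cmod. f_equal. simpl. ring. Qed.

Definition cis (t : R) : CC := (cos t, sin t).
Fixpoint cpow (z : CC) (n : nat) : CC :=
  match n with O => RtoC 1 | S n' => Cmult z (cpow z n') end.
Fixpoint csum (f : nat -> CC) (n : nat) : CC :=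
  match n with O => RtoC 0 | S n' => Cplus (csum f n') (f n') end.

Lemma csum_S f n : csum f (S n) = Cplus (csum f n) (f n).
Proof. reflexivity. Qed.

Lemma csum_ext f g n : (forall m, (m < n)%nat -> f m = g m) -> csum f n = csum g n.
Proof.
  induction n; intros H; simpl; auto.
  rewrite IHn by (intros; apply H; lia). rewrite H by lia. auto.
Qed.

Lemma csum_plus f g n : csum (fun m => Cplus (f m) (g m)) n = Cplus (csum f n) (csum g n).
Proof. induction n; simpl. ring. rewrite IHn. ring. Qed.

Lemma csum_scal c f n : csum (fun m => Cmult c (f m)) n = Cmult c (csum f n).
Proof. induction n; simpl. ring. rewrite IHn. ring. Qed.

Lemma csum_const c n : csum (fun _ => c) n = Cmult (RtoC (INR n)) c.
Proof.
  induction n; simpl csum. unfold RtoC; simpl. apply injective_projections; simpl; ring.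
  rewrite IHn, S_INR. unfold RtoC, Cmult, Cplus; simpl. apply injective_projections; simpl; ring.
Qed.

Lemma csum_bound f n B : (forall m, (m < n)%nat -> Cmod (f m) <= B) ->
  Cmod (csum f n) <= INR n * B.
Proof.
  induction n; intros H; simpl csum.
  - simpl. rewrite Cmod_0. lra.
  - rewrite S_INR. eapply Rle_trans. apply Cmod_triangle.
    assert (Cmod (csum f n) <= INR n * B) by (apply IHn; intros; apply H; lia).
    assert (Cmod (f n) <= B) by (apply H; lia). lra.
Qed.

Lemma cis_mult a b : Cmult (cis a) (cis b) = cis (a + b).
Proof.
  unfold cis, Cmult; simpl. rewrite cos_plus, sin_plus.
  apply injective_projections; simpl; ring.
Qed.

Lemma cpow_cis t s : cpow (cis t) s = cis (INR s * t).
Proof.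
  induction s; simpl cpow.
  - unfold cis. simpl. rewrite Rmult_0_l, cos_0, sin_0. reflexivity.
  - rewrite IHs, cis_mult, S_INR. f_equal. ring.
Qed.

Lemma Cmod_cis t : Cmod (cis t) = 1.
Proof.
  unfold Cmod, cis; simpl.
  pose proof (sin2_cos2 t). unfold Rsqr in H.
  replace (cos t * (cos t * 1) + sin t * (sin t * 1)) with 1 by lra. apply sqrt_1.
Qed.

Lemma geom z n : Cmult (csum (cpow z) n) (Cminus z (RtoC 1)) = Cminus (cpow z n) (RtoC 1).
Proof. induction n; simpl. ring. rewrite Cmult_plus_distr_r, IHn. ring. Qed.

Lemma Cmult_zero_r x y : Cmult x y = RtoC 0 -> y <> RtoC 0 -> x = RtoC 0.
Proof.
  intros H Hy. apply Cmod_eq_0. assert (Cmod (Cmult x y) = 0) by (rewrite H; apply Cmod_0).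
  rewrite Cmod_mult in H0. apply Rmult_integral in H0. destruct H0; auto.
  exfalso; apply Hy; apply Cmod_eq_0; auto.
Qed.

Definition om (M m : nat) : CC := cis (INR m * (2 * PI / INR M)).

Lemma root_sum M s : (1 <= s)%nat -> (s < M)%nat ->
  csum (fun m => cpow (om M m) s) M = RtoC 0.
Proof.
  intros Hs HM.
  set (th := INR s * (2 * PI / INR M)).
  assert (HMpos : 0 < INR M) by (apply lt_0_INR; lia).
  assert (E : forall m, cpow (om M m) s = cpow (cis th) m).
  { intros m. unfold om. rewrite !cpow_cis. unfold th. f_equal. ring. }
  rewrite (csum_ext _ (cpow (cis th))) by (intros; apply E).
  apply (Cmult_zero_r _ (Cminus (cis th) (RtoC 1))).
  - rewrite geom, cpow_cis.
    replace (INR M * th) with (0 + 2 * INR s * PI).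
    2:{ unfold th. field. lra. }
    unfold cis. rewrite cos_period, sin_period, cos_0, sin_0.
    unfold Cminus, Cplus, Copp, RtoC; simpl. apply injective_projections; simpl; ring.
  - intros H. unfold cis, Cminus, Cplus, Copp, RtoC in H. simpl in H.
    injection H as H1 H2.
    assert (Hc : cos th = 1) by lra. assert (Hsn : sin th = 0) by lra.
    assert (Hs1 : 1 <= INR s) by (apply (le_INR 1); lia).
    assert (Hs2 : INR s < INR M) by (apply lt_INR; lia).
    pose proof PI_RGT_0.
    assert (0 < th). { unfold th. apply Rmult_lt_0_compat. lra. apply Rdiv_lt_0_compat; lra. }
    assert (th < 2 * PI).
    { unfold th. apply (Rmult_lt_reg_r (INR M)). lra.
      replace (INR s * (2 * PI / INR M) * INR M) with (INR s * (2 * PI)) by (field; lra).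
      nra. }
    destruct (sin_eq_O_2PI_0 th) as [?|[?|?]]; try lra.
    subst th. rewrite H4, cos_PI in Hc. lra.
Qed.

Definition Sm (be : CC) (r : R) (h : CC -> CC) (M s : nat) : CC :=
  csum (fun m => Cmult (h (Cplus be (Cmult (RtoC r) (om M m)))) (cpow (om M m) s)) M.

Definition Pr (be : CC) (r : R) (h : CC -> CC) (D : nat) : Prop :=
  (forall M s, (1 <= s)%nat -> (s + D <= M)%nat -> Sm be r h M s = RtoC 0) /\
  (forall M, (D <= M)%nat -> (1 <= M)%nat -> Sm be r h M 0 = Cmult (RtoC (INR M)) (h be)).

Lemma Pr_mono be r h D D' : (D <= D')%nat -> Pr be r h D -> Pr be r h D'.
Proof. intros HD [H1 H2]; split; intros; [apply H1|apply H2]; lia. Qed.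

Lemma Sm_ext be r h g M s : (forall z, h z = g z) -> Sm be r h M s = Sm be r g M s.
Proof. intros H. unfold Sm. apply csum_ext. intros. rewrite H. auto. Qed.

Lemma Pr_ext be r h g D : (forall z, h z = g z) -> Pr be r h D -> Pr be r g D.
Proof.
  intros H [H1 H2]; split; intros.
  - rewrite <- (Sm_ext be r h) by auto. apply H1; auto.
  - rewrite <- (Sm_ext be r h) by auto. rewrite <- H. apply H2; auto.
Qed.

Lemma Pr_zero be r D : Pr be r (fun _ => RtoC 0) D.
Proof.
  split; intros; unfold Sm; rewrite (csum_ext _ (fun _ => RtoC 0)) by (intros; ring);
  rewrite csum_const; ring.
Qed.

Lemma Pr_const be r c : Pr be r (fun _ => c) 1.
Proof.
  split; intros; unfold Sm.
  - rewrite csum_scal, root_sum by lia. ring.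
  - rewrite (csum_ext _ (fun _ => c)) by (intros; simpl; ring). apply csum_const.
Qed.

Lemma Sm_plus be r h g M s : Sm be r (fun z => Cplus (h z) (g z)) M s = Cplus (Sm be r h M s) (Sm be r g M s).
Proof. unfold Sm. rewrite <- csum_plus. apply csum_ext. intros; ring. Qed.

Lemma Sm_scal be r h c M s : Sm be r (fun z => Cmult c (h z)) M s = Cmult c (Sm be r h M s).
Proof. unfold Sm. rewrite <- csum_scal. apply csum_ext. intros; ring. Qed.

Lemma Pr_plus be r h g D : Pr be r h D -> Pr be r g D -> Pr be r (fun z => Cplus (h z) (g z)) D.
Proof.
  intros [H1 H2] [G1 G2]; split; intros; rewrite Sm_plus.
  - rewrite H1, G1 by auto. ring.
  - rewrite H2, G2 by auto. ring.
Qed.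

Lemma Pr_scal be r h c D : Pr be r h D -> Pr be r (fun z => Cmult c (h z)) D.
Proof.
  intros [H1 H2]; split; intros; rewrite Sm_scal.
  - rewrite H1 by auto. ring.
  - rewrite H2 by auto. ring.
Qed.

Lemma Pr_mulw be r h D : Pr be r h D -> Pr be r (fun z => Cmult (Cminus z be) (h z)) (S D).
Proof.
  intros [H1 H2].
  assert (E : forall M s, Sm be r (fun z => Cmult (Cminus z be) (h z)) M s
                = Cmult (RtoC r) (Sm be r h M (S s))).
  { intros. unfold Sm. rewrite <- csum_scal. apply csum_ext. intros. simpl cpow. ring. }
  split; intros.
  - rewrite E, H1 by lia. ring.
  - rewrite E, H1 by lia. ring.
Qed.

Lemma Pr_mullin be r h g D : Pr be r h D -> Pr be r (fun z => Cmult (Cminus z g) (h z)) (S D).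
Proof.
  intros H.
  apply (Pr_ext be r (fun z => Cplus (Cmult (Cminus z be) (h z)) (Cmult (Cminus be g) (h z)))).
  { intros; ring. }
  apply Pr_plus. apply Pr_mulw; auto. apply Pr_scal. eapply Pr_mono; [|eauto]. lia.
Qed.

Fixpoint PC (al : nat -> CC) (n : nat) (z : CC) : CC :=
  match n with O => RtoC 1 | S n' => Cmult (Cminus z (al (jn (S n')))) (PC al n' z) end.

Fixpoint psumC (al a : nat -> CC) (N : nat) (z : CC) : CC :=
  match N with O => RtoC 0 | S N' => Cplus (psumC al a N' z) (Cmult (a N') (PC al N' z)) end.

Lemma P_PC (al : nat -> Cplx) n z : P al n z = PC al n z.
Proof. induction n; simpl; try rewrite IHn; reflexivity. Qed.

Lemma psum_psumC (al a : nat -> Cplx) N z : psum al a N z = psumC al a N z.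
Proof. induction N; simpl; try rewrite IHN, P_PC; reflexivity. Qed.

Lemma P_S al n z : PC al (S n) z = Cmult (Cminus z (al (jn (S n)))) (PC al n z).
Proof. reflexivity. Qed.

Lemma psum_S al a N z : psumC al a (S N) z = Cplus (psumC al a N z) (Cmult (a N) (PC al N z)).
Proof. reflexivity. Qed.

Fixpoint Qf (al : nat -> CC) (n d : nat) (z : CC) : CC :=
  match d with O => RtoC 1
  | S d' => Cmult (Cminus z (al (jn (S (n + d'))))) (Qf al n d' z) end.

Lemma P_split al n d z : PC al (n + d) z = Cmult (Qf al n d z) (PC al n z) .
Proof.
  induction d; simpl Qf.
  - rewrite Nat.add_0_r. ring.
  - rewrite Nat.add_succ_r, P_S, IHd. ring.
Qed.

Definition Tn al (c : nat -> CC) n d z := csum (fun e => Cmult (c (n + e)%nat) (Qf al n e z)) d.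

Lemma psum_zero al c n z : (forall k, (k < n)%nat -> c k = RtoC 0 ) ->
  forall N, (N <= n)%nat -> psumC al c N z = RtoC 0 .
Proof.
  intros H N; induction N; intros HN. reflexivity.
  rewrite psum_S, IHN, H by lia. ring.
Qed.

Lemma psum_split al c n d z : (forall k, (k < n)%nat -> c k = RtoC 0 ) ->
  psumC al c (n + d) z = Cmult (PC al n z) (Tn al c n d z) .
Proof.
  intros H. induction d.
  - rewrite Nat.add_0_r, (psum_zero al c n z H) by lia. unfold Tn; simpl. ring.
  - rewrite Nat.add_succ_r, psum_S, IHd, P_split. unfold Tn; simpl csum. ring.
Qed.

Lemma Qf_root al n e : Qf al n (S e) (al (jn (S n))) = RtoC 0.
Proof.
  induction e; simpl Qf.
  - rewrite Nat.add_0_r. ring.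
  - simpl Qf in IHe. rewrite IHe. ring.
Qed.

Lemma Tn_root al c n d : Tn al c n (S d) (al (jn (S n))) = c n .
Proof.
  induction d; unfold Tn in *.
  - simpl. rewrite Nat.add_0_r. ring.
  - rewrite csum_S, IHd, Qf_root. ring.
Qed.

Lemma Pr_Qf be r al n e : Pr be r (Qf al n e) (S e).
Proof.
  induction e; simpl Qf.
  - apply (Pr_const be r (RtoC 1)).
  - apply Pr_mullin. auto.
Qed.

Lemma Pr_Tn be r al c n d : Pr be r (Tn al c n d) d.
Proof.
  induction d; unfold Tn; simpl csum.
  - apply Pr_zero.
  - apply Pr_plus. eapply Pr_mono; [|apply IHd]; lia.
    apply Pr_scal. apply Pr_Qf.
Qed.

Lemma rad_exists al be n : exists r, 0 < r /\ forall i, (1 <= i <= n)%nat ->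
  al (jn i) = be \/ 2 * r <= Cmod (Cminus be (al (jn i))).
Proof.
  induction n.
  - exists 1. split. lra. intros; lia.
  - destruct IHn as [r [Hr H]].
    destruct (classic (al (jn (S n)) = be)) as [E|E].
    + exists r. split; auto. intros i Hi. destruct (Nat.eq_dec i (S n)). subst; auto. apply H; lia.
    + set (dd := Cmod (Cminus be (al (jn (S n))))).
      assert (0 < dd).
      { pose proof (Cmod_ge_0 (Cminus be (al (jn (S n))))). destruct (Rle_lt_or_eq_dec 0 dd); auto.
        exfalso. apply E. symmetry in e. apply Cmod_eq_0 in e.
        assert (be = Cplus (Cminus be (al (jn (S n)))) (al (jn (S n)))) by ring.
        rewrite e in H1. rewrite H1. ring. }
      exists (Rmin r (dd / 2)). split. apply Rmin_pos; lra.
      intros i Hi. destruct (Nat.eq_dec i (S n)).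
      * subst. right. pose proof (Rmin_r r (dd/2)). fold dd. lra.
      * destruct (H i) as [?|?]. lia. auto. right. pose proof (Rmin_l r (dd/2)). lra.
Qed.

Lemma P_lower al be r n w : 0 < r -> (forall i, (1 <= i <= n)%nat ->
  al (jn i) = be \/ 2 * r <= Cmod (Cminus be (al (jn i)))) ->
  Cmod (Cminus w be) = r ->
  forall k, (k <= n)%nat -> r ^ k <= Cmod (PC al k w).
Proof.
  intros Hr H Hw k. induction k; intros Hk.
  - simpl. rewrite Cmod_1. lra.
  - rewrite P_S, Cmod_mult. simpl pow.
    assert (r <= Cmod (Cminus w (al (jn (S k))))).
    { destruct (H (S k)) as [E|E]. lia.
      - rewrite E. lra.
      - pose proof (Cmod_triangle (Cminus w (al (jn (S k)))) (Copp (Cminus w be))).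
        rewrite Cmod_opp, Hw in H0.
        replace (Cplus (Cminus w (al (jn (S k)))) (Copp (Cminus w be))) with (Cminus be (al (jn (S k)))) in H0 by ring.
        lra. }
    pose proof (IHk ltac:(lia)). pose proof (pow_le r k ltac:(lra)).
    apply Rmult_le_compat; lra.
Qed.

Lemma uniq0 (al c : nat -> CC)
  (Hc : forall K, compactC K -> forall eps, eps > 0 -> exists N0 : nat,
     forall N z, (N >= N0)%nat -> K z -> Cmod (psumC al c N z) < eps) :
  forall n, c n = RtoC 0.
Proof.
  intros n; induction n as [n IH] using (well_founded_induction Wf_nat.lt_wf).
  set (be := al (jn (S n))).
  destruct (rad_exists al be n) as [r [Hr Hrad]].
  assert (Hle : forall e, e > 0 -> Cmod (c n) <= e).
  { intros e He.
    set (K := fun z : Cplx => Cnorm z <= Cmod be + r).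
    assert (HK : compactC K).
    { split.
      - exists (Cmod be + r). intros z Hz. exact Hz.
      - intros z Hz. unfold K. rewrite Cnorm_Cmod.
        destruct (Rle_or_lt (Cmod z) (Cmod be + r)) as [?|Hlt]; auto. exfalso.
        destruct (Hz (Cmod z - (Cmod be + r))) as [w [Hw1 Hw2]]. lra.
        unfold K in Hw1. rewrite Cnorm_Cmod in Hw1, Hw2.
        pose proof (Cmod_triangle w (Copp (Csub w z))).
        rewrite Cmod_opp in H.
        replace (Cplus w (Copp (Csub w z))) with z in H by (unfold Csub; apply injective_projections; simpl; ring).
        lra. }
    assert (Hpn : 0 < r ^ n) by (apply pow_lt; lra).
    destruct (Hc K HK (e * r ^ n) ltac:(nra)) as [N0 HN0].
    set (d := S N0).
    assert (Hsplit : forall z, psumC al c (n + d) z = Cmult (PC al n z) (Tn al c n d z)).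
    { intros z. apply psum_split. intros k Hk. apply IH. auto. }
    assert (Hdpos : 0 < INR d) by (apply lt_0_INR; unfold d; lia).
    assert (HT : forall m, Cmod (Tn al c n d (Cplus be (Cmult (RtoC r) (om d m)))) <= e).
    { intros m. set (w := Cplus be (Cmult (RtoC r) (om d m))).
      assert (Hwr : Cmod (Cminus w be) = r).
      { replace (Cminus w be) with (Cmult (RtoC r) (om d m)) by (unfold w; ring).
        rewrite Cmod_mult, Cmod_R, Rabs_pos_eq by lra. unfold om. rewrite Cmod_cis. ring. }
      assert (HKw : K w).
      { unfold K. rewrite Cnorm_Cmod. replace w with (Cplus be (Cminus w be)) by ring.
        eapply Rle_trans. apply Cmod_triangle. rewrite Hwr. lra. }
      pose proof (HN0 (n + d)%nat w ltac:(unfold d; lia) HKw) as Hb.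
      rewrite Hsplit, Cmod_mult in Hb.
      pose proof (P_lower al be r n w Hr Hrad Hwr n (le_n n)) as HP.
      pose proof (Cmod_ge_0 (Tn al c n d w)).
      assert (r ^ n * Cmod (Tn al c n d w) < e * r ^ n) by nra.
      nra. }
    destruct (Pr_Tn be r al c n d) as [_ H2].
    pose proof (H2 d (le_n d) ltac:(unfold d; lia)) as HS.
    replace (Tn al c n d be) with (c n) in HS by (unfold d, be; symmetry; apply Tn_root).
    assert (Hb : Cmod (Sm be r (Tn al c n d) d 0) <= INR d * e).
    { apply csum_bound. intros m _. simpl cpow. rewrite Cmod_mult, Cmod_1, Rmult_1_r. apply HT. }
    rewrite HS, Cmod_mult, Cmod_R, Rabs_pos_eq in Hb by lra.
    apply (Rmult_le_reg_l (INR d)); auto. }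
  apply Cmod_eq_0.
  pose proof (Cmod_ge_0 (c n)).
  destruct (Rle_lt_or_eq_dec 0 (Cmod (c n)) H); auto.
  specialize (Hle (Cmod (c n) / 2) ltac:(lra)). lra.
Qed.

Lemma psumC_sub al a b N z : psumC al (fun k => Cminus (a k) (b k)) N z =
  Cminus (psumC al a N z) (psumC al b N z).
Proof. induction N; simpl. ring. rewrite IHN. ring. Qed.

Theorem lemma3 (alpha : nat -> Cplx)
  (Hdist : forall i j : nat, (1 <= i)%nat -> (1 <= j)%nat -> i <> j -> alpha i <> alpha j)
  (a b : nat -> Cplx) (f g : Cplx -> Cplx)
  (Ha : series_cv_uc alpha a f) (Hb : series_cv_uc alpha b g)
  (Hfg : forall z : Cplx, f z = g z) :
  forall k : nat, a k = b k.
Proof.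
  intros k.
  assert (E : (fun k => Cminus (a k) (b k)) k = RtoC 0).
  { apply (uniq0 alpha (fun k => Cminus (a k) (b k)) ). intros K HK eps Heps.
    destruct (Ha K HK (eps/2) ltac:(lra)) as [N1 H1].
    destruct (Hb K HK (eps/2) ltac:(lra)) as [N2 H2].
    exists (Nat.max N1 N2). intros N z HN Kz.
    specialize (H1 N z ltac:(lia) Kz). specialize (H2 N z ltac:(lia) Kz).
    change (Cnorm (Cminus (psum alpha a N z) (f z)) < eps/2) in H1.
    change (Cnorm (Cminus (psum alpha b N z) (g z)) < eps/2) in H2.
    rewrite Cnorm_Cmod, psum_psumC in H1, H2.
    rewrite psumC_sub.
    replace (Cminus (psumC alpha a N z) (psumC alpha b N z)) with
      (Cplus (Cminus (psumC alpha a N z) (f z)) (Copp (Cminus (psumC alpha b N z) (g z))))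
      by (rewrite Hfg; ring).
    eapply Rle_lt_trans. apply Cmod_triangle. rewrite Cmod_opp. lra. }
  simpl in E. destruct (a k) as [x1 y1], (b k) as [x2 y2].
  unfold Cminus, Cplus, Copp, RtoC in E. simpl in E. injection E as E1 E2.
  f_equal; lra.
Qed.
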